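(* Let $M$ be a finite rectangular monoid, $k$ a field which is a splitting field for the maximal subgroups of $M$, and $X,Y\in\Lambda(M)$ incomparable. Let $A$ be a $k[G_Y\times G_X^{op}]$-module, regarded as an $M$-bimodule via $m\cdot a\cdot m'=\rho_Y(m)a\rho_X(m')$. Then $H^1(M,A)\cong\mathrm{Hom}_{k[G_Y\times G_X^{op}]}(V_{X,Y},A)$, where $V_{X,Y}=k[e_YMe_X]/W_{X,Y}$ and $W_{X,Y}$ is the subspace spanned by $\nabla Y\nabla X\cap e_YMe_X$ together with all elements $e_Ymne_X+e_Yme_Ye_Xne_X-e_Yme_Yne_X-e_Yme_Xne_X$ with $m,n\in M$.
   Context: $E(M)$ idempotents, $m^\omega$ idempotent power of $m$. $M$ rectangular: each $\{f\in E(M):MfM=MeM\}$ closed under multiplication. $\Lambda(M)$: ideals $MeM$, $e\in E(M)$, ordered by inclusion; $\sigma(m)=Mm^\omega M$; $\nabla X=\{m: X\not\subseteq MmM\}$, $\nabla Y\nabla X=\{ab:a\in\nabla Y,b\in\nabla X\}$. Fixed $e_X$ with $Me_XM=X$; $G_X$ = group of units of $e_XMe_X$; $\rho_X(m)=e_Xme_X$ if $X\subseteq\sigma(m)$ and $0\in kG_X$ otherwise. $W_{X,Y}$ is a $G_Y\times G_X^{op}$-submodule of $k[e_YMe_X]$ (left multiplication by $G_Y$, right by $G_X$). $H^1(M,A)$ is the space of derivations $d\colon M\to A$ ($d(mn)=md(n)+d(m)n$) modulo inner derivations $m\mapsto ma-am$. *)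

(* Defs.v *)
From mathcomp Require Import all_boot all_order all_algebra.
Set Implicit Arguments. Unset Strict Implicit. Unset Printing Implicit Defensive.
Import GRing.Theory.
Local Open Scope ring_scope.

Record finMonoid := FinMonoid {
  mcar :> finType;
  mmul : mcar -> mcar -> mcar;
  mone : mcar;
  mmulA : forall a b c, mmul a (mmul b c) = mmul (mmul a b) c;
  mmul1 : forall a, mmul mone a = a;
  mmulm1 : forall a, mmul a mone = a }.

Section MonoidDefs.
Variable M : finMonoid.
Local Notation "a ** b" := (mmul a b) (at level 40, left associativity).

Definition mexp (m : M) (n : nat) : M := iter n (mmul m) (mone M).

Definition idem : {set M} := [set e | e ** e == e].

Definition ideal (m : M) : {set M} := [set a ** m ** b | a in M, b in M].

Definition inLambda (X : {set M}) : Prop := exists2 e, e \in idem & X = ideal e.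

Definition rectangular : Prop :=
  forall e f g, e \in idem -> f \in idem -> g \in idem ->
    ideal f = ideal e -> ideal g = ideal e ->
    (f ** g \in idem) /\ ideal (f ** g) = ideal e.

(* m^omega : the idempotent power of m (it occurs among m^1..m^|M|) *)
Definition omega (m : M) : M :=
  odflt (mone M) [pick e | (e \in idem) &&
      [exists n : 'I_#|M|.+1, (0 < n)%N && (e == mexp m n)]].

Definition sigma (m : M) : {set M} := ideal (omega m).

Definition nabla (X : {set M}) : {set M} := [set m | ~~ (X \subset ideal m)].

Definition nablaprod (Y X : {set M}) : {set M} :=
  [set a ** b | a in nabla Y, b in nabla X].

Definition corner (e f : M) : {set M} := [set x | e ** x ** f == x].

Definition units_of (e : M) : {set M} :=
  [set g | (e ** g ** e == g) &&
     [exists h, [&& e ** h ** e == h, g ** h == e & h ** g == e]]].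

(* k is a splitting field for the finite group G_e: every irreducible
   (matrix) representation of G_e over k has only scalar endomorphisms *)
Definition splitting_for (k : fieldType) (e : M) : Prop :=
  forall (n : nat) (rho : M -> 'M[k]_n),
    (forall g h, g \in units_of e -> h \in units_of e ->
       rho (g ** h) = rho g *m rho h) ->
    rho e = 1%:M ->
    (0 < n)%N ->
    (forall U : 'M[k]_n, (forall g, g \in units_of e -> (U *m rho g <= U)%MS) ->
        (U == 0 :> 'M[k]_n) || row_full U) ->
    forall B : 'M[k]_n, (forall g, g \in units_of e -> B *m rho g = rho g *m B) ->
      exists c : k, B = c%:M.

Definition splitting_field_maxsub (k : fieldType) : Prop :=
  forall e, e \in idem -> splitting_for k e.

End MonoidDefs.

Section ModuleDefs.
Variables (M : finMonoid) (k : fieldType) (A : lmodType k).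
Local Notation "a ** b" := (mmul a b) (at level 40, left associativity).
Variables (X Y : {set M}) (eX eY : M).
(* the k[G_Y x G_X^op]-module structure on A: lY g a = g.a, rX h a = a.h *)
Variables (lY rX : M -> A -> A).

Definition GYGXop_module : Prop :=
  (forall g c a b, g \in units_of eY -> lY g (c *: a + b) = c *: lY g a + lY g b) /\
  (forall h c a b, h \in units_of eX -> rX h (c *: a + b) = c *: rX h a + rX h b) /\
  (forall g g' a, g \in units_of eY -> g' \in units_of eY ->
         lY (g ** g') a = lY g (lY g' a)) /\
  (forall a, lY eY a = a) /\
  (forall h h' a, h \in units_of eX -> h' \in units_of eX ->
         rX (h ** h') a = rX h' (rX h a)) /\
  (forall a, rX eX a = a) /\
  (forall g h a, g \in units_of eY -> h \in units_of eX ->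
         lY g (rX h a) = rX h (lY g a)).

(* M-bimodule structure  m.a.m' = rho_Y(m) a rho_X(m') *)
Definition actL (m : M) (a : A) : A :=
  if (Y \subset sigma m) && (eY ** m ** eY \in units_of eY)
  then lY (eY ** m ** eY) a else 0.
Definition actR (a : A) (m : M) : A :=
  if (X \subset sigma m) && (eX ** m ** eX \in units_of eX)
  then rX (eX ** m ** eX) a else 0.

Definition derivation (d : {ffun M -> A}) : Prop :=
  forall m n, d (m ** n) = actL m (d n) + actR (d m) n.

Definition inner_derivation (d : {ffun M -> A}) : Prop :=
  exists a : A, forall m, d m = actL m a - actR a m.

(* the group algebra k[M] (formal linear combinations); basis vectors *)
Definition delta (x : M) : {ffun M -> k} := [ffun y => (y == x)%:R].

(* spanning set of W_{X,Y} inside k[e_Y M e_X] *)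
Definition Wgen (w : {ffun M -> k}) : Prop :=
  (exists2 x, x \in nablaprod Y X :&: corner eY eX & w = delta x) \/
  (exists m n, w = delta (eY ** m ** n ** eX) + delta (eY ** m ** eY ** eX ** n ** eX)
                   - delta (eY ** m ** eY ** n ** eX) - delta (eY ** m ** eX ** n ** eX)).

Definition lin_ext (phi : {ffun M -> A}) (c : {ffun M -> k}) : A :=
  \sum_x c x *: phi x.

(* Hom_{k[G_Y x G_X^op]}(V_{X,Y}, A), V = k[e_Y M e_X]/W, described by the
   values phi on the basis e_Y M e_X (phi = 0 outside e_Y M e_X) *)
Definition homV (phi : {ffun M -> A}) : Prop :=
  [/\ forall x, x \notin corner eY eX -> phi x = 0,
      forall w, Wgen w -> lin_ext phi w = 0 &
      forall g h x, g \in units_of eY -> h \in units_of eX -> x \in corner eY eX ->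
         phi (g ** x ** h) = lY g (rX h (phi x))].

End ModuleDefs.

(* Main.v *)
Require Import Defs.
From mathcomp Require Import all_boot all_order all_algebra.
Import GRing.Theory.
Local Open Scope ring_scope.
Set Implicit Arguments. Unset Strict Implicit. Unset Printing Implicit Defensive.

Local Notation "a ** b" := (mmul a b) (at level 40, left associativity).

Lemma idemP (M : finMonoid) (e : M) : e \in idem M -> e ** e = e.
Proof. by rewrite inE => /eqP. Qed.

Lemma in_unitsP (M : finMonoid) (e g : M) :
  reflect (e ** g ** e = g /\ exists h, [/\ e ** h ** e = h, g ** h = e & h ** g = e])
          (g \in units_of e).
Proof.
rewrite inE; apply: (iffP andP).
  by case=> /eqP-> /existsP[h /and3P[/eqP ? /eqP ? /eqP ?]]; split=> //; exists h.
case=> -> [h [h1 h2 h3]]; split=> //; apply/existsP; exists h.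
by rewrite h1 h2 h3 !eqxx.
Qed.

Lemma ideal_mem (M : finMonoid) (a x b : M) : a ** x ** b \in ideal x.
Proof. by apply/imset2P; exists a b. Qed.

Lemma mem_ideal_l (M : finMonoid) (a x : M) : a ** x \in ideal x.
Proof. by rewrite -[a ** x]mmulm1 ideal_mem. Qed.
Lemma mem_ideal_r (M : finMonoid) (x b : M) : x ** b \in ideal x.
Proof. by rewrite -[x ** b]mmul1 mmulA ideal_mem. Qed.
Lemma mem_ideal_self (M : finMonoid) (x : M) : x \in ideal x.
Proof. by have := mem_ideal_r x (mone M); rewrite mmulm1. Qed.

Lemma ideal_trans (M : finMonoid) (z x : M) : z \in ideal x -> ideal z \subset ideal x.
Proof.
case/imset2P => a b _ _ ->; apply/subsetP => y /imset2P[c d _ _ ->].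
by have := ideal_mem (c ** a) x (b ** d); rewrite !mmulA.
Qed.

Lemma unit_ideal (M : finMonoid) (e x : M) : e \in idem M ->
  e ** x ** e \in units_of e -> ideal e \subset ideal x.
Proof.
move=> He /in_unitsP[_ [h [_ _ h3]]]; apply: ideal_trans.
by rewrite -{1}h3 !mmulA ideal_mem.
Qed.

Lemma corner_l (M : finMonoid) (e z : M) : e \in idem M -> e ** z ** e = z -> e ** z = z.
Proof. by move=> /idemP He <-; rewrite !mmulA He. Qed.
Lemma corner_r (M : finMonoid) (e z : M) : e \in idem M -> e ** z ** e = z -> z ** e = z.
Proof. by move=> /idemP He <-; rewrite -!mmulA He. Qed.

Lemma onesided (M : finMonoid) (e s t : M) : e \in idem M ->
  e ** s ** e = s -> e ** t ** e = t -> s ** t = e -> t ** s = e.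
Proof.
move=> He Hs Ht Hst.
set C := [set z : M | e ** z ** e == z].
have Cl z : z \in C -> e ** z = z by rewrite inE => /eqP; apply: corner_l.
have Cr z : z \in C -> z ** e = z by rewrite inE => /eqP; apply: corner_r.
have sub : [set t ** z | z in C] \subset C.
  apply/subsetP => y /imsetP[z Hz ->]; rewrite inE.
  by rewrite !mmulA -(mmulA (e ** t)) (Cr _ Hz) (corner_l He Ht).
have inj : {in C &, injective (fun z => t ** z)}.
  move=> z1 z2 H1 H2 E; rewrite -(Cl _ H1) -(Cl _ H2) -Hst -!mmulA.
  by rewrite E.
have eqC : [set t ** z | z in C] = C.
  apply/eqP; rewrite eqEcard sub /= card_in_imset //.
have eC : e \in C by rewrite inE !(idemP He).
rewrite -eqC in eC; case/imsetP: eC => z Hz Ez.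
have -> : s = z.
  by rewrite -[s](corner_r He Hs) Ez mmulA Hst (Cl _ Hz).
by rewrite Ez.
Qed.

Lemma stab (M : finMonoid) (e z : M) : e \in idem M -> e ** z ** e = z ->
  e \in ideal z -> z \in units_of e.
Proof.
move=> He Hz /imset2P[p q _ _ Epq].
have ez t : t ** e ** z = t ** z by rewrite -mmulA (corner_l He Hz).
have ze t : t ** z ** e = t ** z by rewrite -mmulA (corner_r He Hz).
have ee t : t ** e ** e = t ** e by rewrite -mmulA (idemP He).
set a := e ** p ** e; set b := e ** q ** e.
have ea : e ** a ** e = a by rewrite /a !mmulA !ee (idemP He).
have eb : e ** b ** e = b by rewrite /b !mmulA !ee (idemP He).
have E : a ** (z ** b) = e.
  rewrite /a /b !mmulA ez ze.
  have -> : e ** p ** z ** q ** e = e ** (p ** z ** q) ** e by rewrite !mmulA.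
  by rewrite -Epq !(idemP He).
have h1 : z ** b ** a = e.
  apply: (onesided He ea) E.
  by rewrite !mmulA (corner_l He Hz) ee.
have h2 : b ** (a ** z) = e.
  apply: (onesided He) => //; last by rewrite -mmulA.
  by rewrite !mmulA (idemP He) ze.
apply/in_unitsP; split=> //; exists (b ** a); split.
- by rewrite (mmulA e) (corner_l He eb) -mmulA (corner_r He ea).
- by rewrite mmulA.
- by rewrite -mmulA.
Qed.

Lemma unit_mul (M : finMonoid) (e a b : M) : e \in idem M ->
  a \in units_of e -> b \in units_of e -> a ** b \in units_of e.
Proof.
move=> He /in_unitsP[ea [a' [ea' aa' a'a]]] /in_unitsP[eb [b' [eb' bb' b'b]]].
apply/in_unitsP; split.
  by rewrite (mmulA e) (corner_l He ea) -mmulA (corner_r He eb).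
exists (b' ** a'); split.
- by rewrite (mmulA e) (corner_l He eb') -mmulA (corner_r He ea').
- by rewrite !mmulA -(mmulA a b b') bb' (corner_r He ea).
- by rewrite !mmulA -(mmulA b' a' a) a'a (corner_r He eb').
Qed.

Lemma mult (M : finMonoid) (e x y : M) : rectangular M -> e \in idem M ->
  e ** x ** e \in units_of e -> e ** y ** e \in units_of e ->
  e ** (x ** y) ** e = (e ** x ** e) ** (e ** y ** e).
Proof.
move=> Rect He Ha Hb.
move: (Ha) (Hb) => /in_unitsP[ea [a' [ea' aa' a'a]]] /in_unitsP[eb [b' [eb' bb' b'b]]].
set a := e ** x ** e in ea aa' a'a *; set b := e ** y ** e in eb bb' b'b *.
have ae t : t ** a' ** e = t ** a' by rewrite -mmulA (corner_r He ea').
have ea2 t : t ** e ** a' = t ** a' by rewrite -mmulA (corner_l He ea').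
have be t : t ** b' ** e = t ** b' by rewrite -mmulA (corner_r He eb').
have eb2 t : t ** e ** b' = t ** b' by rewrite -mmulA (corner_l He eb').
have K1 : a' ** x ** a' = a'.
  have : a' ** a ** a' = a' by rewrite a'a (corner_l He ea').
  by rewrite /a !mmulA (corner_r He ea') ea2.
have K2 : b' ** y ** b' = b'.
  have : b' ** b ** b' = b' by rewrite b'b (corner_l He eb').
  by rewrite /b !mmulA (corner_r He eb') eb2.
set f := a' ** x; set h := y ** b'.
have ef : e ** f = f by rewrite /f mmulA (corner_l He ea').
have fe : f ** e = e by apply: etrans _ a'a; rewrite /f /a !mmulA (corner_r He ea').
have he : h ** e = h by rewrite /h -mmulA (corner_r He eb').
have eh : e ** h = e by apply: etrans _ bb'; rewrite /h /b !mmulA eb2.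
have Hf : f \in idem M by rewrite inE /f !mmulA K1.
have Hh : h \in idem M by rewrite inE /h !mmulA -(mmulA _ b' y) -(mmulA _ (b' ** y) b') K2.
have If : ideal f = ideal e.
  apply/eqP; rewrite eqEsubset; apply/andP; split; apply: ideal_trans.
    by rewrite -ef mem_ideal_r.
  by rewrite -fe mem_ideal_r.
have Ih : ideal h = ideal e.
  apply/eqP; rewrite eqEsubset; apply/andP; split; apply: ideal_trans.
    by rewrite -he mem_ideal_l.
  by rewrite -eh mem_ideal_l.
have [Hq Iq] := Rect e f h He Hf Hh If Ih.
have eqe : e ** (f ** h) ** e = f ** h by rewrite (mmulA e) ef -mmulA he.
have : f ** h \in units_of e.
  apply: stab => //; rewrite Iq.
  exact: mem_ideal_self.
case/in_unitsP=> _ [k [_ qk _]].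
have qe : f ** h = e.
  have q1 : (f ** h) ** e = f ** h := corner_r He eqe.
  by rewrite -{1}q1 -qk mmulA (idemP Hq).
have : a ** (f ** h) ** b = e ** (x ** y) ** e.
  have K3' : b' ** y ** e = e by apply: etrans _ b'b; rewrite /b !mmulA (corner_r He eb').
  have K3 t : t ** b' ** y ** e = t ** e.
    by rewrite -(mmulA (t ** b')) -mmulA (mmulA b') K3'.
  by rewrite /f /h !mmulA aa' be K3.
by rewrite qe -mmulA (corner_l He eb) => <-.
Qed.

Lemma powunit (M : finMonoid) (e x : M) : rectangular M -> e \in idem M ->
  e ** x ** e \in units_of e -> forall n, e ** mexp x n.+1 ** e \in units_of e.
Proof.
move=> Rect He Hx; elim=> [|n IH].
  by rewrite /mexp /= mmulm1.
have -> : mexp x n.+2 = x ** mexp x n.+1 by [].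
by rewrite (mult Rect He Hx IH) unit_mul.
Qed.

Lemma lemR (M : finMonoid) (e x : M) : rectangular M -> e \in idem M ->
  e ** x ** e \in units_of e -> ideal e \subset sigma x.
Proof.
move=> Rect He Hx; rewrite /sigma /omega; case: pickP => [f|_] /=.
  case/andP=> _ /existsP[n /andP[n0 /eqP ->]].
  case: n n0 => [[|k] Hk] //= _.
  exact: unit_ideal He (powunit Rect He Hx k).
apply/subsetP => z _; have := ideal_mem z (mone M) (mone M).
by rewrite !mmulm1.
Qed.

Lemma zl1 (V : zmodType) (a R b c : V) : (a + R) + (b + c) - (a + c) - (b + R) = 0.
Proof.
apply/eqP; rewrite -addrA -opprD subr_eq0 addrACA [X in _ == X]addrACA.
by rewrite [R + c]addrC.
Qed.

Lemma zl2 (V : zmodType) (a0 b0 a1 a2 a3 a4 z1 z2 : V) :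
  a0 + a4 - a1 - a3 = 0 -> b0 + z1 - a2 - z2 = 0 -> z1 = 0 -> z2 = 0 ->
  a0 - b0 = (a1 - a2) + (a3 - a4).
Proof.
move=> H1 H2 Z1 Z2; move: H2; rewrite Z1 Z2 addr0 subr0 => /eqP; rewrite subr_eq0 => /eqP ->.
move/eqP: H1; rewrite -addrA -opprD subr_eq0 => /eqP H1.
have -> : a0 = a1 + a3 - a4 by rewrite -H1 addrK.
by rewrite addrAC -addrA addrACA.
Qed.

Lemma zl3 (V : zmodType) (a b c : V) : - a + b + c = 0 -> b = a - c.
Proof.
rewrite -addrA addrC => /eqP; rewrite subr_eq0 => /eqP <-.
by rewrite addrK.
Qed.

Lemma linfacts (k : fieldType) (A : lmodType k) (f : A -> A) :
  (forall c a b, f (c *: a + b) = c *: f a + f b) ->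
  [/\ f 0 = 0, forall a b, f (a + b) = f a + f b, forall a, f (- a) = - f a
    & forall a b, f (a - b) = f a - f b].
Proof.
move=> H.
have f0 : f 0 = 0.
  have := H 1 0 0; rewrite !scale1r addr0 => /esym /eqP.
  by rewrite -{3}[f 0]addr0 (inj_eq (addrI _)) => /eqP.
have fD a b : f (a + b) = f a + f b by have := H 1 a b; rewrite !scale1r.
have fN a : f (- a) = - f a by have := H (-1) a 0; rewrite f0 !addr0 !scaleN1r.
by split=> // a b; rewrite fD fN.
Qed.

Lemma lin_ext_delta (M : finMonoid) (k : fieldType) (A : lmodType k)
   (phi : {ffun M -> A}) x : lin_ext phi (delta k x) = phi x.
Proof.
rewrite /lin_ext (bigD1 x) //= big1 => [|y /negbTE Hy]; rewrite ffunE.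
  by rewrite eqxx scale1r addr0.
by rewrite Hy scale0r.
Qed.

Lemma lin_extD (M : finMonoid) (k : fieldType) (A : lmodType k)
   (phi : {ffun M -> A}) u v : lin_ext phi (u + v) = lin_ext phi u + lin_ext phi v.
Proof. by rewrite /lin_ext -big_split; apply: eq_bigr => y _; rewrite ffunE scalerDl. Qed.

Lemma lin_extB (M : finMonoid) (k : fieldType) (A : lmodType k)
   (phi : {ffun M -> A}) u v : lin_ext phi (u - v) = lin_ext phi u - lin_ext phi v.
Proof. by rewrite /lin_ext -sumrB; apply: eq_bigr => y _; rewrite !ffunE scalerBl. Qed.

Lemma ideal_closed_l (M : finMonoid) (a x y : M) : x \in ideal y -> a ** x \in ideal y.
Proof. by move=> H; apply: (subsetP (ideal_trans H)); apply: mem_ideal_l. Qed.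
Lemma ideal_closed_r (M : finMonoid) (a x y : M) : x \in ideal y -> x ** a \in ideal y.
Proof. by move=> H; apply: (subsetP (ideal_trans H)); apply: mem_ideal_r. Qed.

Unset Implicit Arguments.

Theorem mainTheorem14 (M : finMonoid) (k : fieldType) (X Y : {set M}) (eX eY : M)
    (A : lmodType k) (lY rX : M -> A -> A) :
  rectangular M ->
  splitting_field_maxsub M k ->
  eX \in idem M -> ideal eX = X ->
  eY \in idem M -> ideal eY = Y ->
  ~~ (X \subset Y) -> ~~ (Y \subset X) ->
  GYGXop_module eX eY lY rX ->
  exists Phi : {ffun M -> A} -> {ffun M -> A},
    [/\ forall d, derivation X Y eX eY lY rX d -> homV X Y eX eY lY rX (Phi d),
        forall c d1 d2, derivation X Y eX eY lY rX d1 -> derivation X Y eX eY lY rX d2 ->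
          Phi (c *: d1 + d2) = c *: Phi d1 + Phi d2,
        forall phi, homV X Y eX eY lY rX phi ->
          exists2 d, derivation X Y eX eY lY rX d & Phi d = phi &
        forall d, derivation X Y eX eY lY rX d ->
          (Phi d = 0 <-> inner_derivation X Y eX eY lY rX d)].
Proof.
move=> Rect _ HeX HX HeY HY nXY nYX [l1 [r1 [_ [l4 [_ [r6 _]]]]]].
have eYY t : t ** eY ** eY = t ** eY by rewrite -mmulA (idemP HeY).
have eXX t : t ** eX ** eX = t ** eX by rewrite -mmulA (idemP HeX).
have uY : eY \in units_of eY.
  by apply/in_unitsP; rewrite !(idemP HeY); split=> //; exists eY; rewrite !(idemP HeY).
have uX : eX \in units_of eX.
  by apply/in_unitsP; rewrite !(idemP HeX); split=> //; exists eX; rewrite !(idemP HeX).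
set L := actL Y eY lY; set R := actR X eX rX.
have AL m a : L m a = if eY ** m ** eY \in units_of eY then lY (eY ** m ** eY) a else 0.
  rewrite /L /actL -HY; case: (boolP (_ \in units_of eY)) => Hu.
    by rewrite (lemR Rect HeY Hu).
  by rewrite andbF.
have AR a m : R a m = if eX ** m ** eX \in units_of eX then rX (eX ** m ** eX) a else 0.
  rewrite /R /actR -HX; case: (boolP (_ \in units_of eX)) => Hu.
    by rewrite (lemR Rect HeX Hu).
  by rewrite andbF.
have Llin m : forall c a b, L m (c *: a + b) = c *: L m a + L m b.
  move=> c a b; rewrite !AL; case: ifP => Hu; first exact: l1.
  by rewrite scaler0 addr0.
have Rlin m : forall c a b, R (c *: a + b) m = c *: R a m + R b m.
  move=> c a b; rewrite !AR; case: ifP => Hu; first exact: r1.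
  by rewrite scaler0 addr0.
have LB m a b : L m (a - b) = L m a - L m b by case: (linfacts (Llin m)).
have LD m a b : L m (a + b) = L m a + L m b by case: (linfacts (Llin m)).
have L0 m : L m 0 = 0 by case: (linfacts (Llin m)).
have RB m a b : R (a - b) m = R a m - R b m by case: (linfacts (Rlin m)).
have RD m a b : R (a + b) m = R a m + R b m by case: (linfacts (Rlin m)).
have LeY a : L eY a = a by rewrite AL !(idemP HeY) uY l4.
have ReX a : R a eX = a by rewrite AR !(idemP HeX) uX r6.
have Lu g a : g \in units_of eY -> L g a = lY g a.
  by move=> Hg; rewrite AL; case/in_unitsP: (Hg) => -> _; rewrite Hg.
have Ru h a : h \in units_of eX -> R a h = rX h a.
  by move=> Hh; rewrite AR; case/in_unitsP: (Hh) => -> _; rewrite Hh.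
have Lz x a : x \in ideal eX -> L x a = 0.
  move=> Hx; rewrite AL; case: ifP => // Hu.
  have := subset_trans (unit_ideal HeY Hu) (ideal_trans Hx).
  by rewrite HX HY (negbTE nYX).
have Rz x a : x \in ideal eY -> R a x = 0.
  move=> Hx; rewrite AR; case: ifP => // Hu.
  have := subset_trans (unit_ideal HeX Hu) (ideal_trans Hx).
  by rewrite HX HY (negbTE nXY).
have nabY a : a \in ideal eX -> a \in nabla Y.
  move=> Ha; rewrite inE; apply/negP => H.
  by have := subset_trans H (ideal_trans Ha); rewrite HX (negbTE nYX).
have nabX b : b \in ideal eY -> b \in nabla X.
  move=> Hb; rewrite inE; apply/negP => H.
  by have := subset_trans H (ideal_trans Hb); rewrite HY (negbTE nXY).
have Lnab a v : a \in nabla Y -> L a v = 0.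
  rewrite inE AL; case: ifP => // Hu.
  by rewrite -HY (unit_ideal HeY Hu).
have Rnab b v : b \in nabla X -> R v b = 0.
  rewrite inE AR; case: ifP => // Hu.
  by rewrite -HX (unit_ideal HeX Hu).
have cE x : x \in corner eY eX -> eY ** x ** eX = x by rewrite inE => /eqP.
have cl x : x \in corner eY eX -> eY ** x = x.
  by move=> /cE Hx; rewrite -Hx !mmulA (idemP HeY).
have cr x : x \in corner eY eX -> x ** eX = x.
  by move=> /cE Hx; rewrite -Hx -mmulA (idemP HeX).
have cX x : x \in corner eY eX -> x \in ideal eX.
  by move=> /cr <-; apply: mem_ideal_l.
have cY x : x \in corner eY eX -> x \in ideal eY.
  by move=> /cl <-; apply: mem_ideal_r.
have ReXl a q : R a (eX ** q) = R a q by rewrite !AR mmulA (idemP HeX).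
exists (fun d => [ffun x => if x \in corner eY eX then d x else 0]); split.
- move=> d Hd; have {}Hd : forall m n, d (m ** n) = L m (d n) + R (d m) n := Hd.
  split.
  + by move=> x /negbTE Hx; rewrite ffunE Hx.
  + move=> w [[x /setIP[/imset2P[a b Ha Hb ->] Hc] ->]|[m [n ->]]].
      by rewrite lin_ext_delta ffunE Hc Hd Lnab // Rnab // addr0.
    rewrite !lin_extB lin_extD !lin_ext_delta !ffunE.
    set p := eY ** m; set q := n ** eX.
    have -> : p ** n ** eX = p ** q by rewrite /q mmulA.
    have -> : p ** eY ** eX ** n ** eX = p ** (eY ** (eX ** q)) by rewrite /q !mmulA.
    have -> : p ** eY ** n ** eX = p ** (eY ** q) by rewrite /q !mmulA.
    have -> : p ** eX ** n ** eX = p ** (eX ** q) by rewrite /q !mmulA.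
    have qe t : t ** q ** eX = t ** q by rewrite /q -mmulA eXX.
    have cp z : z ** eX = z -> p ** z \in corner eY eX.
      by move=> Hz; rewrite inE /p !mmulA (idemP HeY) -(mmulA (eY ** m) z eX) Hz.
    rewrite cp; last by rewrite /q eXX.
    rewrite cp; last by rewrite -mmulA qe.
    rewrite cp; last by rewrite qe.
    rewrite cp; last by rewrite qe.
    rewrite (Hd p q) (Hd p (eY ** (eX ** q))) (Hd p (eY ** q)) (Hd p (eX ** q)).
    rewrite (Hd eY (eX ** q)) (Hd eY q) !LeY !ReXl.
    rewrite (Rz (eY ** (eX ** q))) ?mem_ideal_r // (Rz (eY ** q)) ?mem_ideal_r //.
    by rewrite !addr0 !LD zl1.
  + move=> g h x Hg Hh Hx.
    have gx : eY ** g = g by case/in_unitsP: Hg => E _; rewrite -E !mmulA (idemP HeY).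
    have hx : h ** eX = h by case/in_unitsP: Hh => E _; rewrite -E -mmulA (idemP HeX).
    have Hc : g ** x ** h \in corner eY eX.
      by rewrite inE !mmulA gx -mmulA hx.
    rewrite !ffunE Hc Hx -mmulA Hd Hd (Rz (x ** h)) ?ideal_closed_r ?cY //.
    by rewrite (Lz x _ (cX x Hx)) add0r (Ru h) // (Lu g) // addr0.
- move=> c d1 d2 _ _; apply/ffunP => x; rewrite !ffunE.
  by case: ifP => _ //; rewrite scaler0 addr0.
- move=> phi [H0 HW Heq].
  have Pz z : z \in nablaprod Y X -> z \in corner eY eX -> phi z = 0.
    move=> H1 H2; rewrite -lin_ext_delta; apply: HW; left; exists z => //.
    by rewrite inE H1.
  have PW m n : phi (eY ** m ** n ** eX) + phi (eY ** m ** eY ** eX ** n ** eX)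
       - phi (eY ** m ** eY ** n ** eX) - phi (eY ** m ** eX ** n ** eX) = 0.
    rewrite -!lin_ext_delta -lin_extD -!lin_extB; apply: HW; right; by exists m, n.
  have inNP a b : a \in nabla Y -> b \in nabla X -> a ** b \in nablaprod Y X.
    by move=> Ha Hb; apply/imset2P; exists a b.
  have Lst m x : x \in corner eY eX -> L m (phi x) = phi (eY ** m ** eY ** x).
    move=> Hx; rewrite AL; case: ifP => Hu.
      have := Heq _ _ _ Hu uX Hx; rewrite r6 => <-.
      by rewrite -mmulA (cr x Hx).
    apply/esym/Pz; last first.
      by rewrite inE !mmulA -(mmulA _ x eX) (cr x Hx) (idemP HeY).
    apply: inNP; last exact: nabX (cY x Hx).
    rewrite inE -HY; apply/negP => H.
    have : eY ** m ** eY \in units_of eY.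
      apply: stab => //; first by rewrite !mmulA !eYY (idemP HeY).
      exact: (subsetP H) _ (mem_ideal_self eY).
    by rewrite Hu.
  have Rst n x : x \in corner eY eX -> R (phi x) n = phi (x ** eX ** n ** eX).
    move=> Hx; rewrite AR; case: ifP => Hu.
      have := Heq _ _ _ uY Hu Hx; rewrite l4 => <-.
      by rewrite (cl x Hx) !mmulA.
    apply/esym/Pz; last first.
      by rewrite inE !mmulA (cl x Hx) eXX.
    rewrite -!mmulA; apply: inNP; first exact: nabY (cX x Hx).
    rewrite mmulA inE -HX; apply/negP => H.
    have : eX ** n ** eX \in units_of eX.
      apply: stab => //; first by rewrite !mmulA !eXX (idemP HeX).
      exact: (subsetP H) _ (mem_ideal_self eX).
    by rewrite Hu.
  have cw t : eY ** t ** eX \in corner eY eX.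
    by rewrite inE !mmulA (idemP HeY) eXX.
  have cw' t : eY ** t ** eY ** eX \in corner eY eX.
    by have := cw (t ** eY); rewrite mmulA.
  exists [ffun m => phi (eY ** m ** eX) - phi (eY ** m ** eY ** eX)].
    move=> m n; rewrite !ffunE -/L -/R LB RB (Lst m _ (cw n)) (Lst m _ (cw' n)).
    rewrite (Rst n _ (cw m)) (Rst n _ (cw' m)) !mmulA !eYY !eXX.
    have P2 := PW m (n ** eY); rewrite !mmulA in P2.
    have Z1 : phi (eY ** m ** eY ** eX ** n ** eY ** eX) = 0.
      apply: Pz; last by have := cw (m ** eY ** eX ** n ** eY); rewrite !mmulA.
      have := inNP _ _ (nabY _ (mem_ideal_l (eY ** m ** eY) eX)) (nabX _ (ideal_mem n eY eX)).
      by rewrite !mmulA.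
    have Z2 : phi (eY ** m ** eX ** n ** eY ** eX) = 0.
      apply: Pz; last by have := cw (m ** eX ** n ** eY); rewrite !mmulA.
      have := inNP _ _ (nabY _ (mem_ideal_l (eY ** m) eX)) (nabX _ (ideal_mem n eY eX)).
      by rewrite !mmulA.
    exact: zl2 (PW m n) P2 Z1 Z2.
  apply/ffunP => x; rewrite !ffunE; case: ifP => Hx; last by rewrite H0 // Hx.
  rewrite (cE x Hx) (Pz (eY ** x ** eY ** eX)) ?subr0 //.
    have := inNP _ _ (nabY _ (ideal_closed_l eY (cX x Hx))) (nabX _ (mem_ideal_r eY eX)).
    by rewrite mmulA.
- move=> d Hd; have {}Hd : forall m n, d (m ** n) = L m (d n) + R (d m) n := Hd.
  have LN m a : L m (- a) = - L m a by case: (linfacts (Llin m)).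
  split.
    move=> H0; exists (d eY) => m.
    change (d m = L m (d eY) - R (d eY) m).
    have dc x : x \in corner eY eX -> d x = 0.
      by move=> Hx; have := congr1 (fun f : {ffun M -> A} => f x) H0; rewrite !ffunE Hx.
    have ceYX : eY ** eX \in corner eY eX.
      by rewrite inE !mmulA !(idemP HeY) eXX.
    have E1 : d eX = - d eY.
      have := Hd eY eX; rewrite dc // LeY ReX.
      by move/esym/eqP; rewrite addr_eq0 => /eqP.
    have E2 := Hd eY (m ** eX).
    have RmeX a : R a (m ** eX) = R a m by rewrite !AR mmulA eXX.
    have cwm : eY ** m ** eX \in corner eY eX by rewrite inE !mmulA (idemP HeY) eXX.
    rewrite mmulA (dc _ cwm) LeY Hd E1 ReX RmeX LN in E2.
    exact: zl3 (esym E2).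
  case=> a Ha; have {}Ha : forall m, d m = L m a - R a m := Ha.
  apply/ffunP => x; rewrite !ffunE; case: ifP => Hx //.
  by rewrite Ha (Lz x _ (cX x Hx)) (Rz x _ (cY x Hx)) subrr.
Qed.
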